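(* Under the model below, for every batch $h$ and every packet index $k$ in that batch, $$\hat d_h^k - d_h^k \le \frac{(2M-1)L}{Nr},$$ i.e. every packet departs under MPGPS at most $(2M-1)L/(Nr)$ time units later than it departs under GPS.
   Context: Model. There are $K$ users (sessions) with separate FIFO queues, and $N$ servers (subcarriers), each transmitting $r$ bits per unit time, so the total service rate is $Nr$. All packets have the same length $L$ bits. Transmissions are error free. The same packet arrival sequence is fed to two systems. GPS (generalized processor sharing): a fluid system of total rate $Nr$; each user $k$ has a weight $\phi_k>0$, and at every instant each backlogged user $k$ is served at rate $Nr\,\phi_k/\sum_{j\in B}\phi_j$, where $B$ is the set of currently backlogged users. A packet's GPS departure time is the time its last bit is served in GPS. MPGPS (multi-server packetized GPS) with parameter $M\ge 1$: it is work conserving (servers are never idle while packets are queued). Whenever the servers become idle at a time $\tau$, among all packets queued at $\tau$ it selects the $\min\big(M,\sum_{k}\hat Q_k(\tau)\big)$ packets that would be the first to complete service in the corresponding GPS system if no further packets arrived after $\tau$ ($\hat Q_k(\tau)$ is the number of user-$k$ packets queued under MPGPS at $\tau$). These selected packets form one batch; a batch of $M_h$ packets is transmitted jointly over all $N$ servers, occupies the servers for $M_hL/(Nr)$ time units, and all its packets depart at the end of that period. Batches are indexed $h=1,2,\dots$; $f_h^k$ denotes the $k$-th packet of batch $h$, $\hat d_h^k$ its departure time under MPGPS, and $d_h^k$ its departure time under GPS. *)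

(* Defs.v *)
From Stdlib Require Import Reals List Arith Bool ClassicalEpsilon.
From Coquelicot Require Import Coquelicot.
Import ListNotations.
Open Scope R_scope.
Open Scope bool_scope.

(* ---------- Arrival sequence ----------
   Packets are indexed by n : nat in order of arrival: a n is the arrival
   time of packet n (nondecreasing, unbounded), u n < K its user. *)

Definition Rleb (x y : R) : bool := if Rle_dec x y then true else false.
Definition Rltb (x y : R) : bool := if Rlt_dec x y then true else false.

(* An index beyond which all packets arrive strictly after t
   (well defined when arrivals are nondecreasing and unbounded). *)
Definition horizon (a : nat -> R) (t : R) : nat :=
  epsilon (inhabits 0%nat) (fun n => t < a n).

Definition arrived_count (a : nat -> R) (u : nat -> nat) (k : nat) (t : R) : nat :=
  length (filter (fun m => Nat.eqb (u m) k && Rleb (a m) t) (seq 0 (horizon a t))).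

(* 1-based FIFO position of packet n in the queue of its user *)
Definition fifo_pos (u : nat -> nat) (n : nat) : nat :=
  length (filter (fun m => Nat.eqb (u m) (u n)) (seq 0 (S n))).

(* ---------- GPS fluid system ----------
   C k t : number of user-k packets arrived by time t (the arrival process fed
   to the fluid system); W k t : cumulative number of bits of user k served
   by time t. *)

Definition backlogged (L : R) (C : nat -> R -> nat) (W : nat -> R -> R)
  (k : nat) (t : R) : bool :=
  Rltb 0 (L * INR (C k t) - W k t).

Definition gps_rate (K N : nat) (r : R) (phi : nat -> R) (L : R)
  (C : nat -> R -> nat) (W : nat -> R -> R) (k : nat) (t : R) : R :=
  if backlogged L C W k t then
    INR N * r * phi k /
      fold_right Rplus 0 (map phi (filter (fun j => backlogged L C W j t) (seq 0 K)))
  else 0.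

Definition is_GPS (K N : nat) (r : R) (phi : nat -> R) (L : R)
  (C : nat -> R -> nat) (W : nat -> R -> R) : Prop :=
  forall k, (k < K)%nat ->
    (forall t, t <= 0 -> W k t = 0) /\
    (forall t, 0 <= L * INR (C k t) - W k t) /\
    (forall s t, s <= t ->
       is_RInt (gps_rate K N r phi L C W k) s t (W k t - W k s)).

Definition gps_dep (L : R) (u : nat -> nat) (W : nat -> R -> R) (n : nat) (t : R) : Prop :=
  0 <= t /\
  INR (fifo_pos u n) * L <= W (u n) t /\
  (forall t', t' < t -> W (u n) t' < INR (fifo_pos u n) * L).

(* ---------- MPGPS ----------
   Batches are indexed h = 0,1,2,... (the paper's h = 1,2,...); B h is the
   list of packets of batch h, s h the time the batch starts transmission. *)

Definition served_before (B : nat -> list nat) (h n : nat) : Prop :=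
  exists h', (h' < h)%nat /\ In n (B h').

Definition served_beforeb (B : nat -> list nat) (h n : nat) : bool :=
  existsb (fun h' => if in_dec Nat.eq_dec n (B h') then true else false) (seq 0 h).

Definition queued_count (a : nat -> R) (B : nat -> list nat) (h : nat) (tau : R) : nat :=
  length (filter (fun n => Rleb (a n) tau && negb (served_beforeb B h n))
                 (seq 0 (horizon a tau))).

Definition batch_time (N : nat) (r L : R) (B : nat -> list nat) (h : nat) : R :=
  INR (length (B h)) * L / (INR N * r).

Definition mpgps_dep (N : nat) (r L : R) (s : nat -> R) (B : nat -> list nat) (h : nat) : R :=
  s h + batch_time N r L B h.

(* (s, B) is an MPGPS schedule with parameter M.  Wh h is the GPS system fed
   with the arrivals up to time s h only ("no further arrivals after s h"). *)
Definition is_MPGPS (K N M : nat) (r : R) (phi : nat -> R) (L : R)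
  (a : nat -> R) (u : nat -> nat) (s : nat -> R) (B : nat -> list nat)
  (Wh : nat -> nat -> R -> R) : Prop :=
  s 0%nat = a 0%nat /\
  (forall n, exists h, In n (B h)) /\
  (forall h, NoDup (B h)) /\
  (forall h n, In n (B h) -> a n <= s h /\ ~ served_before B h n) /\
  (forall h, length (B h) = Nat.min M (queued_count a B h (s h))) /\
  (forall h, is_GPS K N r phi L (fun k t => arrived_count a u k (Rmin t (s h))) (Wh h)) /\
  (* the selected packets are the first to complete in that hypothetical GPS *)
  (forall h p q, In p (B h) -> a q <= s h -> ~ served_before B h q -> ~ In q (B h) ->
     forall tp tq, gps_dep L u (Wh h) p tp -> gps_dep L u (Wh h) q tq -> tp <= tq) /\
  (* work conservation: the next batch starts when the servers become idle if
     packets are queued then, otherwise at the next arrival *)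
  (forall h n, ~ served_before B (S h) n ->
     (forall m, (m < n)%nat -> served_before B (S h) m) ->
     s (S h) = Rmax (s h + batch_time N r L B h) (a n)).

(* Main.v *)
Require Import Defs.
From Stdlib Require Import Reals List Arith Lra Lia ClassicalEpsilon Classical.
From Coquelicot Require Import Coquelicot.
Import ListNotations.
Open Scope R_scope.


Definition sumR (l : list nat) (f : nat -> R) : R := fold_right Rplus 0 (map f l).

Lemma Rltb_true x y : Rltb x y = true <-> x < y.
Proof. unfold Rltb; destruct (Rlt_dec x y); split; intros; auto; discriminate. Qed.
Lemma Rltb_false x y : Rltb x y = false <-> ~ x < y.
Proof. unfold Rltb; destruct (Rlt_dec x y); split; intros; auto; try discriminate; tauto. Qed.
Lemma Rleb_true x y : Rleb x y = true <-> x <= y.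
Proof. unfold Rleb; destruct (Rle_dec x y); split; intros; auto; discriminate. Qed.

Lemma sumR_nonneg (phi : nat -> R) l : (forall j, In j l -> 0 <= phi j) -> 0 <= sumR l phi.
Proof. induction l as [|x l IH]; unfold sumR in *; simpl; intros H; [lra|].
  assert (0 <= phi x) by auto. assert (0 <= fold_right Rplus 0 (map phi l)) by auto. lra. Qed.

Lemma sumR_ge_elem (phi : nat -> R) l k :
  (forall j, In j l -> 0 <= phi j) -> In k l -> phi k <= sumR l phi.
Proof.
  induction l as [|x l IH]; simpl; [tauto|]. intros H [<-|Hk].
  - assert (0 <= sumR l phi) by (apply sumR_nonneg; auto). unfold sumR in *; simpl; lra.
  - assert (0 <= phi x) by (apply H; simpl; auto).
    assert (phi k <= sumR l phi) by (apply IH; auto). unfold sumR in *; simpl; lra.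
Qed.

Lemma sumR_if (b : nat -> bool) (g : nat -> R) l :
  sumR l (fun k => if b k then g k else 0) = sumR (filter b l) g.
Proof. induction l; unfold sumR in *; simpl; auto. destruct (b a); simpl; rewrite IHl; lra. Qed.

Lemma sumR_scal c (g : nat -> R) l : sumR l (fun k => c * g k) = c * sumR l g.
Proof. induction l; unfold sumR in *; simpl; [lra|]. rewrite IHl; lra. Qed.

Lemma sumR_le (f g : nat -> R) l : (forall k, In k l -> f k <= g k) -> sumR l f <= sumR l g.
Proof. induction l; unfold sumR in *; simpl; intros H; [lra|].
  assert (f a <= g a) by auto. assert (fold_right Rplus 0 (map f l) <= fold_right Rplus 0 (map g l)) by auto. lra. Qed.

Lemma sumR_ext (f g : nat -> R) l : (forall k, In k l -> f k = g k) -> sumR l f = sumR l g.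
Proof. induction l; unfold sumR in *; simpl; intros H; auto. rewrite H, IHl; auto. Qed.

Lemma sumR_minus (f g : nat -> R) l : sumR l (fun k => f k - g k) = sumR l f - sumR l g.
Proof. induction l; unfold sumR in *; simpl; [lra|]. rewrite IHl; lra. Qed.

Lemma NR_pos (N : nat) (r : R) : (0 < N)%nat -> 0 < r -> 0 < INR N * r.
Proof. intros HN Hr. apply Rmult_lt_0_compat; auto. apply lt_0_INR; auto. Qed.

Set Default Proof Using "All".
Section GPS.
Variables (K N : nat) (r L : R) (phi : nat -> R) (C : nat -> R -> nat) (W : nat -> R -> R).
Hypothesis HN : (0 < N)%nat.
Hypothesis Hr : 0 < r.
Hypothesis HL : 0 < L.
Hypothesis Hphi : forall k, (k < K)%nat -> 0 < phi k.
Hypothesis HW : is_GPS K N r phi L C W.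

Local Notation NR := (INR N * r).


Let D t := fold_right Rplus 0 (map phi (filter (fun j => backlogged L C W j t) (seq 0 K))).

Lemma D_pos k t : (k < K)%nat -> backlogged L C W k t = true -> phi k <= D t /\ 0 < D t.
Proof.
  intros Hk Hb. assert (phi k <= D t).
  { unfold D. apply (sumR_ge_elem phi). intros j Hj. apply filter_In in Hj as [Hj _].
    apply in_seq in Hj. apply Rlt_le, Hphi; lia. apply filter_In; split; auto. apply in_seq; lia. }
  split; auto. specialize (Hphi k Hk); lra.
Qed.

Lemma rate_eq k t : (k < K)%nat -> backlogged L C W k t = true ->
  gps_rate K N r phi L C W k t = NR * phi k / D t.
Proof. intros. unfold gps_rate. rewrite H0. reflexivity. Qed.

Lemma rate_bounds k t : (k < K)%nat -> 0 <= gps_rate K N r phi L C W k t <= NR.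
Proof.
  intros Hk. destruct (backlogged L C W k t) eqn:Hb.
  - rewrite rate_eq; auto. destruct (D_pos k t Hk Hb) as [H1 H2]. pose proof (NR_pos N r HN Hr). pose proof (Hphi k Hk).
    split. apply Rmult_le_pos; [nra| apply Rlt_le, Rinv_0_lt_compat; auto].
    assert (NR * phi k / D t * D t = NR * phi k) as E by (field; lra). apply (Rmult_le_reg_r (D t)); auto. rewrite E. nra.
  - unfold gps_rate; rewrite Hb. pose proof (NR_pos N r HN Hr); lra.
Qed.

Lemma W_int k s t : (k < K)%nat -> s <= t -> is_RInt (gps_rate K N r phi L C W k) s t (W k t - W k s).
Proof. intros Hk Hst. apply (HW k Hk). auto. Qed.

Lemma W_mono k s t : (k < K)%nat -> s <= t -> W k s <= W k t.
Proof.
  intros Hk Hst. assert (0 <= W k t - W k s); [|lra].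
  apply (is_RInt_ge_0 (gps_rate K N r phi L C W k) s t); auto. apply W_int; auto. intros; apply rate_bounds; auto.
Qed.

Lemma W_lip k s t : (k < K)%nat -> s <= t -> W k t - W k s <= NR * (t - s).
Proof.
  intros Hk Hst. pose proof (is_RInt_const s t NR) as Hc.
  assert (W k t - W k s <= scal (t - s) NR).
  { apply (is_RInt_le (gps_rate K N r phi L C W k) (fun _ => NR) s t); auto. apply W_int; auto. intros; apply rate_bounds; auto. }
  unfold scal in H; simpl in H; unfold mult in H; simpl in H. lra.
Qed.

Lemma W_zero k t : (k < K)%nat -> t <= 0 -> W k t = 0.
Proof. intros Hk Ht. apply (HW k Hk); auto. Qed.

Lemma W_le_arr k t : (k < K)%nat -> W k t <= L * INR (C k t).
Proof. intros Hk. pose proof (proj1 (proj2 (HW k Hk)) t). lra. Qed.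

Lemma lemmaA i j s t : (i < K)%nat -> (j < K)%nat -> s <= t ->
  (forall x, s < x < t -> backlogged L C W i x = true) ->
  (W j t - W j s) / phi j <= (W i t - W i s) / phi i.
Proof.
  intros Hi Hj Hst Hbl.
  pose proof (is_RInt_scal _ s t (/ phi j) _ (W_int j s t Hj Hst)) as Ij.
  pose proof (is_RInt_scal _ s t (/ phi i) _ (W_int i s t Hi Hst)) as Ii.
  unfold scal in Ij, Ii; simpl in Ij, Ii; unfold mult in Ij, Ii; simpl in Ij, Ii.
  unfold Rdiv. rewrite (Rmult_comm (W j t - W j s)), (Rmult_comm (W i t - W i s)).
  apply (is_RInt_le _ _ s t _ _ Hst Ij Ii).
  intros x Hx. specialize (Hbl x Hx). pose proof (Hphi i Hi). pose proof (Hphi j Hj).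
  destruct (D_pos i x Hi Hbl) as [_ HD]. pose proof (NR_pos N r HN Hr).
  rewrite (rate_eq i x Hi Hbl).
  assert (/ phi i * (NR * phi i / D x) = NR / D x) as E by (field; lra). rewrite E.
  destruct (backlogged L C W j x) eqn:Hbj.
  - rewrite (rate_eq j x Hj Hbj). right; field; lra.
  - unfold gps_rate; rewrite Hbj. rewrite Rmult_0_r. apply Rlt_le. apply Rdiv_lt_0_compat; auto.
Qed.

Lemma rate_sum t : sumR (seq 0 K) (fun k => gps_rate K N r phi L C W k t) <= NR /\
  ((exists k, (k < K)%nat /\ backlogged L C W k t = true) ->
   sumR (seq 0 K) (fun k => gps_rate K N r phi L C W k t) = NR).
Proof.
  assert (HE : (exists k, (k < K)%nat /\ backlogged L C W k t = true) -> 0 < D t).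
  { intros [k [Hk Hb]]. destruct (D_pos k t Hk Hb). lra. }
  unfold gps_rate. rewrite sumR_if. change (fold_right Rplus 0 (map phi (filter (fun j : nat => backlogged L C W j t) (seq 0 K)))) with (D t).
  rewrite (sumR_ext _ (fun k => NR / D t * phi k)) by (intros; unfold Rdiv; ring).
  rewrite sumR_scal. change (sumR (filter (fun j : nat => backlogged L C W j t) (seq 0 K)) phi) with (D t).
  destruct (Rlt_dec 0 (D t)) as [Hp|Hp].
  - assert (NR / D t * D t = NR) as E by (field; lra). rewrite E; split; auto; lra.
  - split.
    + assert (D t = 0).
      { assert (0 <= D t); [|lra]. apply sumR_nonneg. intros j Hj. apply filter_In in Hj as [Hj _].
        apply in_seq in Hj. apply Rlt_le, Hphi; lia. }
      rewrite H, Rmult_0_r. pose proof (NR_pos N r HN Hr); lra.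
    + intros Hx; specialize (HE Hx); lra.
Qed.

Lemma sum_int l s t : (forall k, In k l -> (k < K)%nat) -> s <= t ->
  is_RInt (fun x => sumR l (fun k => gps_rate K N r phi L C W k x)) s t (sumR l (fun k => W k t - W k s)).
Proof.
  intros Hl Hst. induction l as [|k l IH].
  - unfold sumR; simpl. pose proof (is_RInt_const s t 0) as H.
    unfold scal in H; simpl in H; unfold mult in H; simpl in H. rewrite Rmult_0_r in H. exact H.
  - unfold sumR; simpl. apply (is_RInt_plus (gps_rate K N r phi L C W k)).
    + apply W_int; auto. apply Hl; simpl; auto.
    + apply IH. intros; apply Hl; simpl; auto.
Qed.

Lemma work_le s t : s <= t -> sumR (seq 0 K) (fun k => W k t - W k s) <= NR * (t - s).
Proof.
  intros Hst. pose proof (is_RInt_const s t NR) as Hc. unfold scal in Hc; simpl in Hc; unfold mult in Hc; simpl in Hc.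
  replace (NR * (t - s)) with ((t - s) * NR) by ring.
  apply (is_RInt_le _ (fun _ => NR) s t _ _ Hst (sum_int (seq 0 K) s t (fun k H => proj2 (proj1 (in_seq _ _ _) H)) Hst) Hc).
  intros x _. apply rate_sum.
Qed.

Lemma work_eq s t : s <= t -> (forall x, s < x < t -> exists k, (k < K)%nat /\ backlogged L C W k x = true) ->
  sumR (seq 0 K) (fun k => W k t - W k s) = NR * (t - s).
Proof.
  intros Hst Hb. pose proof (is_RInt_const s t NR) as Hc. unfold scal in Hc; simpl in Hc; unfold mult in Hc; simpl in Hc.
  pose proof (sum_int (seq 0 K) s t (fun k H => proj2 (proj1 (in_seq _ _ _) H)) Hst) as Hs.
  apply (is_RInt_ext _ (fun _ => NR)) in Hs.
  - assert (A1 := is_RInt_le _ _ s t _ _ Hst Hs Hc (fun x _ => Rle_refl NR)).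
    assert (A2 := is_RInt_le _ _ s t _ _ Hst Hc Hs (fun x _ => Rle_refl NR)). lra.
  - intros x Hx. rewrite Rmin_left, Rmax_right in Hx by auto. apply rate_sum. auto.
Qed.

Lemma dep_eq k P t : (k < K)%nat -> INR P * L <= W k t -> (forall t', t' < t -> W k t' < INR P * L) ->
  W k t = INR P * L.
Proof.
  intros Hk H1 H2. destruct (Rle_lt_dec (W k t) (INR P * L)) as [H|H]; [lra|exfalso].
  pose proof (NR_pos N r HN Hr). pose proof (lt_0_INR N HN). set (e := (W k t - INR P * L) / (2 * NR)).
  assert (0 < e) by (unfold e; apply Rdiv_lt_0_compat; lra).
  pose proof (W_lip k (t - e) t Hk ltac:(lra)). pose proof (H2 (t - e) ltac:(lra)).
  assert (NR * (t - (t - e)) = (W k t - INR P * L) / 2) by (unfold e; field; lra). lra.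
Qed.

Lemma dep_exists k P : (k < K)%nat -> (1 <= P)%nat -> (exists t1, INR P * L <= W k t1) ->
  exists t, 0 <= t /\ INR P * L <= W k t /\ (forall t', t' < t -> W k t' < INR P * L).
Proof.
  intros Hk HP [t1 Ht1]. pose proof (NR_pos N r HN Hr). pose proof (lt_0_INR N HN).
  assert (HPL : 0 < INR P * L). { apply Rmult_lt_0_compat; auto. apply lt_0_INR; lia. }
  set (E := fun t => W k t < INR P * L).
  assert (Hb : bound E).
  { exists t1. intros x Hx. unfold E in Hx. destruct (Rle_lt_dec x t1); auto.
    pose proof (W_mono k t1 x Hk ltac:(lra)); lra. }
  assert (HE0 : E 0) by (unfold E; rewrite W_zero; auto; lra).
  destruct (completeness E Hb (ex_intro _ 0 HE0)) as [t0 [Hub Hlub]].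
  assert (Ht0 : 0 <= t0) by (apply Hub; auto).
  assert (Hbel : forall t', t' < t0 -> W k t' < INR P * L).
  { intros t' Ht'. destruct (classic (exists e, E e /\ t' < e)) as [[e [He Hte]]|Hn].
    - pose proof (W_mono k t' e Hk ltac:(lra)). unfold E in He; lra.
    - exfalso. assert (t0 <= t'); [|lra]. apply Hlub. intros x Hx. destruct (Rle_lt_dec x t'); auto.
      exfalso; apply Hn; eauto. }
  exists t0. split; auto. split; auto.
  destruct (Rle_lt_dec (INR P * L) (W k t0)) as [H1|H1]; auto. exfalso.
  set (d := (INR P * L - W k t0) / (2 * NR)). assert (0 < d) by (unfold d; apply Rdiv_lt_0_compat; lra).
  pose proof (W_lip k t0 (t0 + d) Hk ltac:(lra)).
  assert (NR * (t0 + d - t0) = (INR P * L - W k t0) / 2) by (unfold d; field; lra).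
  assert (E (t0 + d)) by (unfold E; lra). pose proof (Hub _ H5). lra.
Qed.

End GPS.


Lemma small_delta (b : nat -> R) n c : 0 < c -> exists d, 0 < d /\ forall k, (k < n)%nat -> 0 < b k -> c * d < b k.
Proof.
  intros Hc. induction n as [|n IH].
  - exists 1; split; [lra|]; intros; lia.
  - destruct IH as [d [Hd H]]. destruct (Rlt_dec 0 (b n)) as [Hb|Hb].
    + exists (Rmin d (b n / (2 * c))). split. apply Rmin_pos; auto. apply Rdiv_lt_0_compat; lra.
      intros k Hk Hbk. destruct (Nat.eq_dec k n) as [->|Hne].
      * apply Rle_lt_trans with (c * (b n / (2 * c))). apply Rmult_le_compat_l; [lra|apply Rmin_r].
        assert (c * (b n / (2 * c)) = b n / 2) by (field; lra). lra.
      * apply Rle_lt_trans with (c * d). apply Rmult_le_compat_l; [lra|apply Rmin_l]. apply H; auto; lia.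
    + exists d; split; auto. intros k Hk Hbk. destruct (Nat.eq_dec k n) as [->|Hne]; [lra|]. apply H; auto; lia.
Qed.

Lemma eps_zero x c : (forall e, 0 < e -> x <= c * e) -> 0 < c -> x <= 0.
Proof.
  intros H Hc. destruct (Rle_lt_dec x 0); auto. specialize (H (x / (2 * c)) ltac:(apply Rdiv_lt_0_compat; lra)).
  assert (c * (x / (2 * c)) = x / 2) by (field; lra). lra.
Qed.

Set Default Proof Using "All".
Section Uniq.
Variables (K N : nat) (r L : R) (phi : nat -> R) (C C' : nat -> R -> nat) (W G : nat -> R -> R) (tau : R).
Hypothesis HN : (0 < N)%nat.
Hypothesis Hr : 0 < r.
Hypothesis HL : 0 < L.
Hypothesis Hphi : forall k, (k < K)%nat -> 0 < phi k.
Hypothesis HW : is_GPS K N r phi L C W.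
Hypothesis HG : is_GPS K N r phi L C' G.
Hypothesis HC : forall k t, (k < K)%nat -> t <= tau -> C' k t = C k t.
Hypothesis Hloc : forall t0, exists d, 0 < d /\ forall t k, t0 <= t < t0 + d -> C k t = C k t0.
Local Notation NR := (INR N * r).

Definition EqU t := forall t' k, t' <= t -> (k < K)%nat -> W k t' = G k t'.

Lemma local_step t0 : t0 < tau -> EqU t0 -> exists d, 0 < d /\ t0 + d <= tau /\ EqU (t0 + d).
Proof.
  intros Ht0 He. pose proof (NR_pos N r HN Hr) as HNR.
  destruct (Hloc t0) as [d1 [Hd1 Hc1]].
  destruct (small_delta (fun k => L * INR (C k t0) - W k t0) K NR HNR) as [d2 [Hd2 Hs]].
  set (d := Rmin (Rmin d1 d2) (tau - t0)).
  assert (Hd : 0 < d) by (unfold d; repeat apply Rmin_pos; lra).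
  assert (Hdd1 : d <= d1) by (unfold d; eapply Rle_trans; [apply Rmin_l|apply Rmin_l]).
  assert (Hdd2 : d <= d2) by (unfold d; eapply Rle_trans; [apply Rmin_l|apply Rmin_r]).
  assert (Hdt : d <= tau - t0) by (unfold d; apply Rmin_r).
  assert (Hbl : forall x j, t0 < x < t0 + d -> (j < K)%nat -> backlogged L C W j x = backlogged L C' G j x).
  { intros x j Hx Hj. unfold backlogged. rewrite HC by (auto; lra).
    rewrite (Hc1 x j ltac:(lra)).
    pose proof (W_lip K N r L phi C W HN Hr HL Hphi HW j t0 x Hj ltac:(lra)) as LW.
    pose proof (W_lip K N r L phi C' G HN Hr HL Hphi HG j t0 x Hj ltac:(lra)) as LG.
    pose proof (W_mono K N r L phi C W HN Hr HL Hphi HW j t0 x Hj ltac:(lra)) as MW.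
    pose proof (W_mono K N r L phi C' G HN Hr HL Hphi HG j t0 x Hj ltac:(lra)) as MG.
    pose proof (W_le_arr K N r L phi C W HN Hr HL Hphi HW j t0 Hj) as AW.
    rewrite <- (He t0 j (Rle_refl _) Hj) in MG, LG.
    destruct (Rlt_dec 0 (L * INR (C j t0) - W j t0)) as [Hp|Hp].
    - pose proof (Hs j Hj Hp). assert (NR * (x - t0) <= NR * d2) by (apply Rmult_le_compat_l; lra).
      assert (0 < L * INR (C j t0) - W j x) by lra. assert (0 < L * INR (C j t0) - G j x) by lra.
      apply Rltb_true in H1. apply Rltb_true in H2. rewrite H1, H2. auto.
    - assert (~ 0 < L * INR (C j t0) - W j x) by lra. assert (~ 0 < L * INR (C j t0) - G j x) by lra.
      apply Rltb_false in H. apply Rltb_false in H0. rewrite H, H0; auto. }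
  exists (d / 2). split; [lra|]. split; [lra|].
  intros t' k Ht' Hk. destruct (Rle_lt_dec t' t0) as [Hle|Hlt]; [apply He; auto|].
  pose proof (W_int K N r L phi C W HN Hr HL Hphi HW k t0 t' Hk ltac:(lra)) as IW.
  pose proof (W_int K N r L phi C' G HN Hr HL Hphi HG k t0 t' Hk ltac:(lra)) as IG.
  apply (is_RInt_ext _ (gps_rate K N r phi L C' G k)) in IW.
  - assert (A1 := is_RInt_le _ _ t0 t' _ _ ltac:(lra) IW IG (fun x _ => Rle_refl _)).
    assert (A2 := is_RInt_le _ _ t0 t' _ _ ltac:(lra) IG IW (fun x _ => Rle_refl _)).
    rewrite (He t0 k (Rle_refl _) Hk) in A1, A2. lra.
  - intros x Hx. rewrite Rmin_left, Rmax_right in Hx by lra. unfold gps_rate.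
    rewrite (Hbl x k ltac:(lra) Hk).
    rewrite (filter_ext_in _ (fun j => backlogged L C' G j x)). reflexivity.
    intros j Hj. apply in_seq in Hj. apply Hbl; [lra|lia].
Qed.

Lemma gps_unique : forall k t, (k < K)%nat -> t <= tau -> W k t = G k t.
Proof.
  pose proof (NR_pos N r HN Hr) as HNR.
  set (E := fun t => t <= tau /\ EqU t).
  assert (HE0 : E (Rmin 0 tau)).
  { split. apply Rmin_r. intros t' k Ht' Hk. assert (t' <= 0) by (pose proof (Rmin_l 0 tau); lra).
    rewrite (W_zero K N r L phi C W HN Hr HL Hphi HW k t' Hk H). rewrite (W_zero K N r L phi C' G HN Hr HL Hphi HG k t' Hk H). auto. }
  assert (Hb : bound E) by (exists tau; intros x [Hx _]; auto).
  destruct (completeness E Hb (ex_intro _ _ HE0)) as [t0 [Hub Hlub]].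
  assert (Htt : t0 <= tau) by (apply Hlub; intros x [Hx _]; auto).
  assert (Hbel : forall t', t' < t0 -> EqU t').
  { intros t' Ht'. destruct (classic (exists e, E e /\ t' < e)) as [[e [[_ He] Hte]]|Hn].
    - intros t'' k H1 H2. apply He; auto; lra.
    - exfalso. assert (t0 <= t'); [|lra]. apply Hlub. intros x Hx. destruct (Rle_lt_dec x t'); auto.
      exfalso; apply Hn; eauto. }
  assert (He0 : EqU t0).
  { intros t' k Ht' Hk. destruct (Rlt_le_dec t' t0) as [Hl|Hl]. apply (Hbel t'); auto; lra.
    assert (t' = t0) by lra. subst t'.
    assert (forall e, 0 < e -> Rabs (W k t0 - G k t0) <= (2 * NR) * e).
    { intros e He. pose proof (Hbel (t0 - e) ltac:(lra) (t0 - e) k (Rle_refl _) Hk).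
      pose proof (W_lip K N r L phi C W HN Hr HL Hphi HW k (t0 - e) t0 Hk ltac:(lra)).
      pose proof (W_lip K N r L phi C' G HN Hr HL Hphi HG k (t0 - e) t0 Hk ltac:(lra)).
      pose proof (W_mono K N r L phi C W HN Hr HL Hphi HW k (t0 - e) t0 Hk ltac:(lra)).
      pose proof (W_mono K N r L phi C' G HN Hr HL Hphi HG k (t0 - e) t0 Hk ltac:(lra)).
      unfold Rabs; destruct (Rcase_abs _); nra. }
    assert (Rabs (W k t0 - G k t0) <= 0) by (apply (eps_zero _ (2 * NR)); auto; lra).
    pose proof (Rabs_pos (W k t0 - G k t0)). unfold Rabs in *; destruct (Rcase_abs _); lra. }
  intros k t Hk Ht. destruct (Rle_lt_dec t t0) as [Hl|Hl]. apply He0; auto.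
  exfalso. destruct (Rle_lt_dec tau t0) as [Ht0|Ht0]; [lra|].
  destruct (local_step t0 Ht0 He0) as [d [Hd [Hdt Hed]]].
  assert (t0 + d <= t0) by (apply Hub; split; auto). lra.
Qed.
End Uniq.


Set Default Proof Using "All".
Section Order.
Variables (K N : nat) (r L : R) (phi : nat -> R) (C C' : nat -> R -> nat) (W G : nat -> R -> R) (tau : R).
Hypothesis HN : (0 < N)%nat.
Hypothesis Hr : 0 < r.
Hypothesis HL : 0 < L.
Hypothesis Hphi : forall k, (k < K)%nat -> 0 < phi k.
Hypothesis HW : is_GPS K N r phi L C W.
Hypothesis HG : is_GPS K N r phi L C' G.
Hypothesis HWG : forall k t, (k < K)%nat -> t <= tau -> W k t = G k t.

Lemma div_mono a b c : 0 < c -> a <= b -> a / c <= b / c.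
Proof. intros. unfold Rdiv. apply Rmult_le_compat_r; auto. apply Rlt_le, Rinv_0_lt_compat; auto. Qed.
Lemma div_mono_lt a b c : 0 < c -> a < b -> a / c < b / c.
Proof. intros. unfold Rdiv. apply Rmult_lt_compat_r; auto. apply Rinv_0_lt_compat; auto. Qed.

Lemma order_contra kq kx (Pq Px : nat) d tq tx :
  (kq < K)%nat -> (kx < K)%nat ->
  (forall t, tau <= t -> INR Pq * L <= L * INR (C kq t)) ->
  (forall t, tau <= t -> INR Px * L <= L * INR (C' kx t)) ->
  W kq d < INR Pq * L -> INR Px * L <= W kx d ->
  INR Pq * L <= G kq tq ->
  INR Px * L <= G kx tx -> (forall t', t' < tx -> G kx t' < INR Px * L) ->
  tq <= tx -> False.
Proof.
  intros Hkq Hkx Haq Hax Hq Hx Htq Htx Htx' Hle.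
  pose proof (Hphi kq Hkq) as Pq0. pose proof (Hphi kx Hkx) as Px0.
  destruct (Rle_lt_dec d tau) as [Hd|Hd].
  - rewrite (HWG kq d Hkq Hd) in Hq. rewrite (HWG kx d Hkx Hd) in Hx.
    destruct (Rle_lt_dec tx d) as [H1|H1]; [|specialize (Htx' d H1); lra].
    pose proof (W_mono K N r L phi C' G HN Hr HL Hphi HG kq tq d Hkq ltac:(lra)). lra.
  - assert (Wqtau : W kq tau <= W kq d) by (apply (W_mono K N r L phi C W HN Hr HL Hphi HW); auto; lra).
    assert (A1 : (W kx d - W kx tau) / phi kx <= (W kq d - W kq tau) / phi kq).
    { apply (lemmaA K N r L phi C W HN Hr HL Hphi HW); auto; try lra. intros x Hx0.
      apply Rltb_true. pose proof (W_mono K N r L phi C W HN Hr HL Hphi HW kq x d Hkq ltac:(lra)).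
      pose proof (Haq x ltac:(lra)). lra. }
    destruct (Rlt_le_dec tq tau) as [Ht|Ht].
    { pose proof (W_mono K N r L phi C' G HN Hr HL Hphi HG kq tq tau Hkq ltac:(lra)).
      rewrite <- (HWG kq tau Hkq (Rle_refl _)) in H. lra. }
    assert (A2 : (G kq tq - G kq tau) / phi kq <= (G kx tq - G kx tau) / phi kx).
    { apply (lemmaA K N r L phi C' G HN Hr HL Hphi HG); auto; try lra. intros x Hx0.
      apply Rltb_true. pose proof (Htx' x ltac:(lra)). pose proof (Hax x ltac:(lra)). lra. }
    rewrite <- !(HWG _ tau) in A2 by (auto; lra).
    assert (Gx : G kx tq <= INR Px * L).
    { rewrite <- (dep_eq K N r L phi C' G HN Hr HL Hphi HG kx Px tx Hkx Htx Htx').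
      apply (W_mono K N r L phi C' G HN Hr HL Hphi HG); auto. }
    assert (B1 : (INR Pq * L - W kq tau) / phi kq <= (G kq tq - W kq tau) / phi kq) by (apply div_mono; lra).
    assert (B2 : (G kx tq - W kx tau) / phi kx <= (INR Px * L - W kx tau) / phi kx) by (apply div_mono; lra).
    assert (B3 : (INR Px * L - W kx tau) / phi kx <= (W kx d - W kx tau) / phi kx) by (apply div_mono; lra).
    assert (B4 : (W kq d - W kq tau) / phi kq < (INR Pq * L - W kq tau) / phi kq) by (apply div_mono_lt; lra).
    lra.
Qed.
End Order.


Lemma filter_len_mono {A} (f g : A -> bool) l : (forall m, In m l -> f m = true -> g m = true) ->
  (length (filter f l) <= length (filter g l))%nat.
Proof. induction l; simpl; intros H; auto. destruct (f a) eqn:Hf.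
  - rewrite (H a (or_introl eq_refl) Hf). simpl. apply le_n_S, IHl; auto.
  - destruct (g a); simpl; [apply le_S|]; apply IHl; auto. Qed.

Lemma filter_nil_all {A} (f : A -> bool) l : (forall m, In m l -> f m = false) -> filter f l = [].
Proof. induction l; simpl; intros H; auto. rewrite (H a (or_introl eq_refl)). apply IHl; auto. Qed.

Lemma Rleb_false x y : y < x -> Rleb x y = false.
Proof. intros. unfold Rleb. destruct (Rle_dec x y); auto. lra. Qed.

Lemma fifo_S (u : nat -> nat) x : fifo_pos u x = S (length (filter (fun m => Nat.eqb (u m) (u x)) (seq 0 x))).
Proof. unfold fifo_pos. rewrite seq_S, filter_app, length_app. simpl. rewrite Nat.eqb_refl. simpl. lia. Qed.

Lemma fifo_pos_ge1 (u : nat -> nat) x : (1 <= fifo_pos u x)%nat.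
Proof. rewrite fifo_S; lia. Qed.

Lemma F3 (u : nat -> nat) x y : (x < y)%nat -> u x = u y -> (fifo_pos u x < fifo_pos u y)%nat.
Proof.
  intros Hxy Hu. rewrite (fifo_S u y). unfold fifo_pos. apply le_n_S.
  rewrite <- Hu. assert (E : seq 0 y = seq 0 (S x) ++ seq (0 + S x) (y - S x)) by (rewrite <- seq_app; f_equal; lia).
  rewrite E, filter_app, length_app. lia.
Qed.

Set Default Proof Using "All".
Section Arr.
Variables (a : nat -> R) (u : nat -> nat).
Hypothesis Hmono : forall n m, (n <= m)%nat -> a n <= a m.
Hypothesis Hunb : forall T, exists n, T < a n.

Definition cnt k t n0 := length (filter (fun m => Nat.eqb (u m) k && Rleb (a m) t) (seq 0 n0)).

Lemma horizon_spec t : t < a (horizon a t).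
Proof. unfold horizon. apply (epsilon_spec (inhabits 0%nat) (fun n => t < a n)). apply Hunb. Qed.

Lemma cnt_split k t n1 n2 : (n1 <= n2)%nat ->
  cnt k t n2 = (cnt k t n1 + length (filter (fun m => Nat.eqb (u m) k && Rleb (a m) t) (seq n1 (n2 - n1))))%nat.
Proof. intros H. unfold cnt. replace n2 with (n1 + (n2 - n1))%nat at 1 by lia. rewrite seq_app, filter_app, length_app. reflexivity. Qed.

Lemma cnt_stable k t n1 n2 : t < a n1 -> (n1 <= n2)%nat -> cnt k t n2 = cnt k t n1.
Proof.
  intros Ht Hn. rewrite (cnt_split k t n1 n2 Hn).
  rewrite filter_nil_all; simpl; [lia|].
  intros m Hm. apply in_seq in Hm. rewrite Rleb_false. apply Bool.andb_false_r.
  pose proof (Hmono n1 m ltac:(lia)). lra.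
Qed.

Lemma cnt_mono k t n1 n2 : (n1 <= n2)%nat -> (cnt k t n1 <= cnt k t n2)%nat.
Proof. intros Hn. rewrite (cnt_split k t n1 n2 Hn). lia. Qed.

Lemma ac_cnt k t n0 : t < a n0 -> arrived_count a u k t = cnt k t n0.
Proof.
  intros Ht. unfold arrived_count. fold (cnt k t (horizon a t)).
  pose proof (horizon_spec t).
  destruct (Nat.le_ge_cases n0 (horizon a t)).
  - apply cnt_stable; auto.
  - symmetry; apply cnt_stable; auto.
Qed.

Lemma lt_idx n m : a n < a m -> (n < m)%nat.
Proof. intros H. destruct (Nat.lt_ge_cases n m); auto. pose proof (Hmono m n H0). lra. Qed.

Lemma fifo_cnt x t : a x <= t -> fifo_pos u x = cnt (u x) t (S x).
Proof.
  intros Hx. unfold fifo_pos, cnt. f_equal. apply filter_ext_in. intros m Hm. apply in_seq in Hm.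
  unfold Rleb. destruct (Rle_dec (a m) t); [symmetry; apply Bool.andb_true_r|]. pose proof (Hmono m x ltac:(lia)). lra.
Qed.

Lemma F1 x t : a x <= t -> (fifo_pos u x <= arrived_count a u (u x) t)%nat.
Proof.
  intros Hx. pose proof (horizon_spec t). rewrite (ac_cnt _ _ _ H). rewrite (fifo_cnt x t Hx).
  apply cnt_mono. apply lt_idx. lra.
Qed.

Lemma F2 x t : t < a x -> (arrived_count a u (u x) t + 1 <= fifo_pos u x)%nat.
Proof.
  intros Hx. rewrite (ac_cnt _ _ _ Hx). rewrite (fifo_S u). unfold cnt.
  assert (length (filter (fun m => Nat.eqb (u m) (u x) && Rleb (a m) t) (seq 0 x)) <=
          length (filter (fun m => Nat.eqb (u m) (u x)) (seq 0 x)))%nat.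
  { apply filter_len_mono. intros m _ Hm. apply Bool.andb_true_iff in Hm; tauto. }
  lia.
Qed.

Lemma loc_const t0 : exists d, 0 < d /\ forall t k, t0 <= t < t0 + d -> arrived_count a u k t = arrived_count a u k t0.
Proof.
  set (n0 := horizon a (t0 + 1)). pose proof (horizon_spec (t0 + 1)) as Hn0. fold n0 in Hn0.
  destruct (small_delta (fun m => a m - t0) n0 1 ltac:(lra)) as [d [Hd Hs]].
  exists (Rmin d 1). split. apply Rmin_pos; lra. intros t k Ht.
  pose proof (Rmin_l d 1). pose proof (Rmin_r d 1).
  rewrite (ac_cnt k t n0) by lra. rewrite (ac_cnt k t0 n0) by lra. unfold cnt. f_equal.
  apply filter_ext_in. intros m Hm. apply in_seq in Hm. f_equal. unfold Rleb.
  destruct (Rle_dec (a m) t), (Rle_dec (a m) t0); auto.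
  - exfalso. specialize (Hs m ltac:(lia) ltac:(lra)). lra.
  - exfalso. lra.
Qed.

End Arr.


Lemma sumR_ind_seq v n st : sumR (seq st n) (fun k => if Nat.eqb v k then 1 else 0) =
  if (Nat.leb st v && Nat.ltb v (st + n))%bool then 1 else 0.
Proof.
  revert st. induction n as [|n IH]; intros st.
  - unfold sumR; simpl. destruct (Nat.leb st v) eqn:E1; destruct (Nat.ltb v (st + 0)) eqn:E2; simpl; auto.
    apply Nat.leb_le in E1; apply Nat.ltb_lt in E2; lia.
  - simpl. unfold sumR in *; simpl. rewrite IH.
    destruct (Nat.eqb_spec v st) as [->|Hne].
    + rewrite Nat.leb_refl. replace (Nat.leb (S st) st) with false by (symmetry; apply Nat.leb_gt; lia).
      replace (Nat.ltb st (st + S n)) with true by (symmetry; apply Nat.ltb_lt; lia). simpl; lra.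
    + destruct (Nat.leb_spec st v), (Nat.leb_spec (S st) v), (Nat.ltb_spec v (S st + n)), (Nat.ltb_spec v (st + S n));
        simpl; try lra; lia.
Qed.

Lemma sumR_plus (f g : nat -> R) l : sumR l (fun k => f k + g k) = sumR l f + sumR l g.
Proof. induction l; unfold sumR in *; simpl; [lra|]. rewrite IHl; lra. Qed.

Lemma len_split (u : nat -> nat) K S : (forall x, In x S -> (u x < K)%nat) ->
  INR (length S) = sumR (seq 0 K) (fun k => INR (length (filter (fun x => Nat.eqb (u x) k) S))).
Proof.
  induction S as [|x S IH]; intros H.
  - simpl. symmetry. clear H. induction (seq 0 K); unfold sumR in *; simpl; auto. rewrite IHl; lra.
  - simpl length. rewrite S_INR, IH by (intros; apply H; simpl; auto).
    rewrite (sumR_ext (fun k => INR (length (filter (fun x0 => Nat.eqb (u x0) k) (x :: S)))) (fun k => INR (length (filter (fun x0 => Nat.eqb (u x0) k) S)) + (if Nat.eqb (u x) k then 1 else 0))).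
    + rewrite sumR_plus, sumR_ind_seq. pose proof (H x (or_introl eq_refl)).
      assert (E : (Nat.leb 0 (u x) && Nat.ltb (u x) (0 + K))%bool = true).
      { apply Bool.andb_true_iff. split. apply Nat.leb_le; lia. apply Nat.ltb_lt; lia. }
      rewrite E. cbv beta iota. lra.
    + intros k _. simpl filter. destruct (Nat.eqb (u x) k); cbv beta iota; simpl length; try rewrite S_INR; lra.
Qed.

Lemma nat_minmax (l : list nat) : NoDup l -> l <> [] ->
  exists lo hi, In lo l /\ In hi l /\ (length l <= S hi - lo)%nat /\ (lo <= hi)%nat.
Proof.
  intros Hnd Hne.
  assert (exists lo, In lo l /\ forall p, In p l -> (lo <= p)%nat) as [lo [Hlo Hlo']].
  { clear Hnd. induction l as [|x l IH]; [congruence|]. destruct l as [|y l'].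
    - exists x; split; simpl; auto. intros p [<-|[]]; auto.
    - destruct IH as [m [Hm Hm']]; [congruence|]. exists (Nat.min x m). split.
      + destruct (Nat.min_spec x m) as [[_ ->]|[_ ->]]; simpl in *; auto.
      + intros p [<-|Hp]. lia. specialize (Hm' p Hp). lia. }
  assert (exists hi, In hi l /\ forall p, In p l -> (p <= hi)%nat) as [hi [Hhi Hhi']].
  { clear Hnd Hlo Hlo'. induction l as [|x l IH]; [congruence|]. destruct l as [|y l'].
    - exists x; split; simpl; auto. intros p [<-|[]]; auto.
    - destruct IH as [m [Hm Hm']]; [congruence|]. exists (Nat.max x m). split.
      + destruct (Nat.max_spec x m) as [[_ ->]|[_ ->]]; simpl in *; auto.
      + intros p [<-|Hp]. lia. specialize (Hm' p Hp). lia. }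
  exists lo, hi. repeat split; auto.
  - assert (incl l (seq lo (S hi - lo))).
    { intros p Hp. apply in_seq. specialize (Hlo' p Hp). specialize (Hhi' p Hp). lia. }
    pose proof (NoDup_incl_length Hnd H). rewrite length_seq in H0. auto.
Qed.

Set Default Proof Using "All".
Section Count.
Variables (K N : nat) (r L : R) (phi : nat -> R) (C : nat -> R -> nat) (W : nat -> R -> R) (u : nat -> nat).
Hypothesis HN : (0 < N)%nat.
Hypothesis Hr : 0 < r.
Hypothesis HL : 0 < L.
Hypothesis Hphi : forall k, (k < K)%nat -> 0 < phi k.
Hypothesis HW : is_GPS K N r phi L C W.

Lemma count_bound S T d : T <= d -> NoDup S ->
  (forall x, In x S -> (u x < K)%nat) ->
  (forall x, In x S -> INR (fifo_pos u x) * L <= W (u x) d) ->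
  (forall x, In x S -> W (u x) T <= (INR (fifo_pos u x) - 1) * L) ->
  INR (length S) * L <= INR N * r * (d - T).
Proof.
  intros HTd Hnd HK Hd HT.
  rewrite (len_split u K S HK). rewrite Rmult_comm, <- sumR_scal.
  eapply Rle_trans; [|apply (work_le K N r L phi C W HN Hr HL Hphi HW T d HTd)].
  apply sumR_le. intros k Hk. apply in_seq in Hk.
  set (Sk := filter (fun x => Nat.eqb (u x) k) S).
  assert (HSk : forall x, In x Sk -> In x S /\ u x = k).
  { intros x Hx. apply filter_In in Hx as [H1 H2]. apply Nat.eqb_eq in H2. auto. }
  destruct Sk as [|x0 l] eqn:ESk.
  - simpl. pose proof (W_mono K N r L phi C W HN Hr HL Hphi HW k T d ltac:(lia) HTd). lra.
  - rewrite <- ESk in *.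
    assert (Hnd' : NoDup (map (fifo_pos u) Sk)).
    { apply NoDup_map_NoDup_ForallPairs. 2: { unfold Sk; apply NoDup_filter; auto. }
      intros x y Hx Hy Hxy. apply HSk in Hx as [_ Hx]. apply HSk in Hy as [_ Hy].
      destruct (Nat.lt_trichotomy x y) as [H|[H|H]]; auto.
      - pose proof (F3 u x y H ltac:(congruence)). lia.
      - pose proof (F3 u y x H ltac:(congruence)). lia. }
    destruct (nat_minmax _ Hnd') as [lo [hi [Hlo [Hhi [Hlen Hlh]]]]].
    { rewrite ESk; simpl; congruence. }
    apply in_map_iff in Hlo as [xl [Exl Hxl]]. apply in_map_iff in Hhi as [xh [Exh Hxh]].
    destruct (HSk xl Hxl) as [Sl Ul]. destruct (HSk xh Hxh) as [Sh Uh].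
    pose proof (Hd xh Sh) as A1. pose proof (HT xl Sl) as A2. rewrite Uh, Exh in A1. rewrite Ul, Exl in A2.
    rewrite length_map in Hlen. apply le_INR in Hlen. rewrite minus_INR in Hlen by lia. rewrite S_INR in Hlen.
    nra.
Qed.
End Count.


Lemma sumR_app (f : nat -> R) l1 l2 : sumR (l1 ++ l2) f = sumR l1 f + sumR l2 f.
Proof. induction l1; unfold sumR in *; simpl; [lra|]. rewrite IHl1; lra. Qed.

Lemma min_exists (P : nat -> Prop) x : P x -> exists n0, P n0 /\ forall m, (m < n0)%nat -> ~ P m.
Proof.
  revert x. intros x. induction x as [x IH] using (well_founded_induction lt_wf). intros Hx.
  destruct (classic (exists m, (m < x)%nat /\ P m)) as [[m [Hm Pm]]|Hn].
  - apply (IH m Hm Pm).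
  - exists x; split; auto. intros m Hm Pm; apply Hn; eauto.
Qed.

Set Default Proof Using "All".
Section Ev.
Variables (K N : nat) (r L : R) (phi : nat -> R) (C : nat -> R -> nat) (G : nat -> R -> R) (tau : R).
Hypothesis HN : (0 < N)%nat.
Hypothesis Hr : 0 < r.
Hypothesis HL : 0 < L.
Hypothesis Hphi : forall k, (k < K)%nat -> 0 < phi k.
Hypothesis HG : is_GPS K N r phi L C G.
Hypothesis HCc : forall k t, tau <= t -> C k t = C k tau.

Lemma eventually k P : (k < K)%nat -> INR P * L <= L * INR (C k tau) -> exists t1, INR P * L <= G k t1.
Proof.
  intros Hk HP. apply NNPP. intros Hn.
  assert (Hlt : forall t, G k t < INR P * L).
  { intros t. destruct (Rlt_le_dec (G k t) (INR P * L)); auto. exfalso; apply Hn; eauto. }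
  pose proof (NR_pos N r HN Hr) as HNR.
  set (Bd := sumR (seq 0 K) (fun j => L * INR (C j tau))).
  assert (HBd : 0 <= Bd). { apply sumR_nonneg. intros j _. apply Rmult_le_pos; [lra|apply pos_INR]. }
  set (t := tau + (Bd + 1) / (INR N * r)).
  assert (Ht : tau <= t). { unfold t. assert (0 < (Bd + 1) / (INR N * r)) by (apply Rdiv_lt_0_compat; lra). lra. }
  pose proof (work_eq K N r L phi C G HN Hr HL Hphi HG tau t Ht) as Heq.
  assert (Hb : forall x, tau < x < t -> exists k0, (k0 < K)%nat /\ backlogged L C G k0 x = true).
  { intros x Hx. exists k. split; auto. apply Rltb_true. rewrite (HCc k x) by lra. specialize (Hlt x). lra. }
  specialize (Heq Hb).
  assert (sumR (seq 0 K) (fun j => G j t - G j tau) <= Bd).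
  { unfold Bd. apply sumR_le. intros j Hj. apply in_seq in Hj.
    pose proof (W_le_arr K N r L phi C G HN Hr HL Hphi HG j t ltac:(lia)). rewrite (HCc j t Ht) in H.
    assert (0 <= G j tau).
    { destruct (Rle_lt_dec tau 0). rewrite (W_zero K N r L phi C G HN Hr HL Hphi HG j tau ltac:(lia) r0); lra.
      rewrite <- (W_zero K N r L phi C G HN Hr HL Hphi HG j 0 ltac:(lia) (Rle_refl 0)).
      apply (W_mono K N r L phi C G HN Hr HL Hphi HG); auto; lia||lra. }
    lra. }
  assert (INR N * r * (t - tau) = Bd + 1) by (unfold t; field; pose proof (lt_0_INR N HN); try split; lra). lra.
Qed.
End Ev.

Set Default Proof Using "All".
Section Main.
Variables (K N M : nat) (r L : R) (phi : nat -> R) (a : nat -> R) (u : nat -> nat)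
  (W : nat -> R -> R) (s : nat -> R) (B : nat -> list nat) (Wh : nat -> nat -> R -> R).
Hypothesis HK : (0 < K)%nat.
Hypothesis HN : (0 < N)%nat.
Hypothesis HM1 : (1 <= M)%nat.
Hypothesis Hr : 0 < r.
Hypothesis HL : 0 < L.
Hypothesis Hphi : forall k, (k < K)%nat -> 0 < phi k.
Hypothesis Hu : forall n, (u n < K)%nat.
Hypothesis Ha0 : forall n, 0 <= a n.
Hypothesis Hmono : forall n m, (n <= m)%nat -> a n <= a m.
Hypothesis Hunb : forall T, exists n, T < a n.
Hypothesis HW : is_GPS K N r phi L (arrived_count a u) W.
Hypothesis HMP : is_MPGPS K N M r phi L a u s B Wh.

Local Notation NR := (INR N * r).
Local Notation bt := (batch_time N r L B).

Lemma Hbatch : forall h n, In n (B h) -> a n <= s h /\ ~ served_before B h n.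
Proof. apply HMP. Qed.
Lemma Hndup : forall h, NoDup (B h).
Proof. apply HMP. Qed.
Lemma Hlen : forall h, length (B h) = Nat.min M (queued_count a B h (s h)).
Proof. apply HMP. Qed.
Lemma HWh : forall h, is_GPS K N r phi L (fun k t => arrived_count a u k (Rmin t (s h))) (Wh h).
Proof. apply HMP. Qed.
Lemma Hsel : forall h p q, In p (B h) -> a q <= s h -> ~ served_before B h q -> ~ In q (B h) ->
     forall tp tq, gps_dep L u (Wh h) p tp -> gps_dep L u (Wh h) q tq -> tp <= tq.
Proof. apply HMP. Qed.
Lemma Hwc : forall h n, ~ served_before B (S h) n ->
     (forall m, (m < n)%nat -> served_before B (S h) m) ->
     s (S h) = Rmax (s h + bt h) (a n).
Proof. apply HMP. Qed.
Lemma Hs0 : s 0%nat = a 0%nat.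
Proof. apply HMP. Qed.

Lemma Bdisj x i j : In x (B i) -> In x (B j) -> i = j.
Proof.
  intros Hi Hj. destruct (Nat.lt_trichotomy i j) as [H|[H|H]]; auto.
  - exfalso. apply (proj2 (Hbatch j x Hj)). exists i; auto.
  - exfalso. apply (proj2 (Hbatch i x Hi)). exists j; auto.
Qed.

Lemma unserved_mono x i j : (i <= j)%nat -> ~ served_before B j x -> ~ served_before B i x.
Proof. intros Hij Hn [h' [Hh' Hin]]. apply Hn. exists h'. split; auto; lia. Qed.

Lemma tu_pos : 0 < L / NR.
Proof. apply Rdiv_lt_0_compat; auto. apply NR_pos; auto. Qed.

Lemma bt_eq i : bt i = INR (length (B i)) * (L / NR).
Proof. unfold batch_time. unfold Rdiv. ring. Qed.

Lemma bt_le i : bt i <= INR M * (L / NR).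
Proof.
  rewrite bt_eq. apply Rmult_le_compat_r. apply Rlt_le, tu_pos. apply le_INR. rewrite Hlen. lia.
Qed.

Lemma W_before x T : T <= a x -> W (u x) T <= (INR (fifo_pos u x) - 1) * L.
Proof.
  intros HT. pose proof (NR_pos N r HN Hr).
  assert (W (u x) T - (INR (fifo_pos u x) - 1) * L <= 0); [|lra].
  apply (eps_zero _ NR); auto. intros e He.
  pose proof (W_lip K N r L phi _ W HN Hr HL Hphi HW (u x) (T - e) T (Hu x) ltac:(lra)).
  pose proof (W_le_arr K N r L phi _ W HN Hr HL Hphi HW (u x) (T - e) (Hu x)).
  pose proof (F2 a u Hmono Hunb x (T - e) ltac:(lra)) as HF. apply le_INR in HF.
  rewrite plus_INR in HF. simpl INR in HF.
  assert (L * INR (arrived_count a u (u x) (T - e)) <= L * (INR (fifo_pos u x) - 1)) by (apply Rmult_le_compat_l; lra).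
  replace (NR * (T - (T - e))) with (NR * e) in H0 by ring. lra.
Qed.

Definition done d x := INR (fifo_pos u x) * L <= W (u x) d.

Definition Start d j := j = 0%nat \/ exists m, j = S m /\
   (s (S m) <> s m + bt m \/ exists q, In q (B m) /\ ~ done d q).

Lemma last_start d h : exists j, (j <= h)%nat /\ Start d j /\ forall i, (j < i <= h)%nat -> ~ Start d i.
Proof.
  induction h as [|h IH].
  - exists 0%nat. split; auto. split; [left; auto|]. intros; lia.
  - destruct (classic (Start d (S h))) as [Hs|Hs].
    + exists (S h). split; auto. split; auto. intros; lia.
    + destruct IH as [j [Hj [Hsj Hn]]]. exists j. split; auto. split; auto.
      intros i Hi. destruct (Nat.eq_dec i (S h)) as [->|Hne]; auto. apply Hn; lia.
Qed.

Lemma not_start d m : ~ Start d (S m) -> s (S m) = s m + bt m /\ forall q, In q (B m) -> done d q.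
Proof.
  intros Hn. split.
  - apply NNPP. intros H. apply Hn. right. exists m. split; auto.
  - intros q Hq. apply NNPP. intros H. apply Hn. right. exists m. split; auto. right; eauto.
Qed.

Lemma s_acc d j h : (forall i, (j < i <= h)%nat -> ~ Start d i) ->
  forall k, (j + k <= h)%nat -> s (j + k)%nat = s j + sumR (seq j k) (fun i => bt i).
Proof.
  intros Hn k. induction k as [|k IH]; intros Hk.
  - rewrite Nat.add_0_r. unfold sumR; simpl; lra.
  - rewrite seq_S, sumR_app. replace (j + S k)%nat with (S (j + k)) by lia.
    destruct (not_start d (j + k) (Hn (S (j + k)) ltac:(lia))) as [E _]. rewrite E, IH by lia.
    unfold sumR; simpl. lra.
Qed.

Lemma batches_list st k : exists Sl, NoDup Sl /\
  INR (length Sl) = sumR (seq st k) (fun i => INR (length (B i))) /\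
  (forall x, In x Sl <-> exists i, (st <= i < st + k)%nat /\ In x (B i)).
Proof.
  induction k as [|k IH].
  - exists []. split; [constructor|]. split; [unfold sumR; simpl; auto|].
    intros x; split; [intros []|intros [i [Hi _]]; lia].
  - destruct IH as [Sl [Hnd [Hl Hin]]]. exists (Sl ++ B (st + k)%nat). split; [|split].
    + apply NoDup_app; auto. apply Hndup. intros x Hx Hx'. apply Hin in Hx as [i [Hi Hxi]].
      pose proof (Bdisj x i (st + k) Hxi Hx'). lia.
    + rewrite length_app, plus_INR, seq_S, sumR_app, Hl. unfold sumR at 3; simpl. lra.
    + intros x; split.
      * intros Hx. apply in_app_or in Hx as [Hx|Hx]. apply Hin in Hx as [i [Hi Hxi]]. exists i; split; auto; lia.
        exists (st + k)%nat; split; auto; lia.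
      * intros [i [Hi Hxi]]. apply in_or_app. destruct (Nat.eq_dec i (st + k)) as [->|Hne]; auto.
        left. apply Hin. exists i; split; auto; lia.
Qed.

Lemma main_bound h n d : In n (B h) -> gps_dep L u W n d ->
  s h + bt h - d <= (2 * INR M - 1) * L / NR.
Proof.
  intros Hn Hd. pose proof (NR_pos N r HN Hr) as HNR. pose proof tu_pos as Htu. set (tu := L / NR) in *.
  destruct (last_start d h) as [j [Hjh [Hst Hnst]]].
  set (k := (h - j)%nat).
  assert (Hsh : s h = s j + sumR (seq j k) (fun i => bt i)).
  { replace h with (j + k)%nat at 1 by (unfold k; lia). apply (s_acc d j h Hnst); unfold k; lia. }
  destruct (batches_list j k) as [Sl [HndSl [HlSl HinSl]]].
  assert (HnSl : ~ In n Sl).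
  { intros H. apply HinSl in H as [i [Hi Hxi]]. pose proof (Bdisj n i h Hxi Hn). unfold k in Hi; lia. }
  set (Sx := Sl ++ [n]).
  assert (HndS : NoDup Sx).
  { apply NoDup_app; auto. repeat constructor; auto. intros x Hx [<-|[]]; auto. }
  assert (HlenS : INR (length Sx) = sumR (seq j k) (fun i => INR (length (B i))) + 1).
  { unfold Sx. rewrite length_app, plus_INR, HlSl. simpl; lra. }
  assert (HinS : forall x, In x Sx -> (exists i, (j <= i < h)%nat /\ In x (B i)) \/ x = n).
  { intros x Hx. apply in_app_or in Hx as [Hx|[<-|[]]]; auto. left. apply HinSl in Hx as [i [Hi Hxi]].
    exists i; split; auto; unfold k in Hi; lia. }
  assert (HdoneS : forall x, In x Sx -> done d x).
  { intros x Hx. destruct (HinS x Hx) as [[i [Hi Hxi]]| ->].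
    - apply (proj2 (not_start d i (Hnst (S i) ltac:(lia)))); auto.
    - unfold done. apply Hd. }
  assert (HunS : forall x, In x Sx -> ~ served_before B j x).
  { intros x Hx. destruct (HinS x Hx) as [[i [Hi Hxi]]| ->].
    - apply (unserved_mono x j i); [lia|]. apply (Hbatch i x Hxi).
    - apply (unserved_mono n j h); auto. apply (Hbatch h n Hn). }
  assert (Hsum : sumR (seq j k) (fun i => bt i) = sumR (seq j k) (fun i => INR (length (B i))) * tu).
  { rewrite Rmult_comm, <- sumR_scal. apply sumR_ext. intros i _. rewrite bt_eq. fold tu. ring. }
  assert (Key : exists T c, (forall x, In x Sx -> T <= a x) /\ s j = T + c /\ 0 <= c <= INR M * tu).
  { destruct Hst as [Hj0|[m [Hjm Hcase]]].
    - exists (s j), 0. split; [|split; [ring|split; [lra|apply Rmult_le_pos; [apply pos_INR|lra]]]].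
      intros x Hx. rewrite Hj0, Hs0. apply Hmono. lia.
    - destruct (Req_dec (s (S m)) (s m + bt m)) as [Heq|Hneq].
      +
        destruct Hcase as [Hc|[q [Hq Hnq]]]; [contradiction|].
        exists (s m), (bt m). split; [|split; [rewrite Hjm; auto|split; [rewrite bt_eq; apply Rmult_le_pos; [apply pos_INR|apply Rlt_le, tu_pos]|apply bt_le]]].
        intros x Hx. destruct (Rle_lt_dec (a x) (s m)) as [Hax|Hax]; [exfalso|lra].
        assert (Hux : ~ served_before B (S m) x) by (rewrite <- Hjm; auto).
        assert (HxBm : ~ In x (B m)) by (intros H; apply Hux; exists m; auto).
        assert (Hxm : ~ served_before B m x) by (apply (unserved_mono x m (S m)); auto).
        set (C' := fun k t => arrived_count a u k (Rmin t (s m))).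
        assert (HG : is_GPS K N r phi L C' (Wh m)) by apply HWh.
        assert (HCc : forall k t, s m <= t -> C' k t = C' k (s m)).
        { intros k0 t Ht. unfold C'. rewrite Rmin_right by auto. rewrite Rmin_left by lra. auto. }
        assert (HCt : forall k t, s m <= t -> C' k t = arrived_count a u k (s m)).
        { intros k0 t Ht. unfold C'. rewrite Rmin_right by auto. auto. }
        assert (Haq : a q <= s m) by apply (Hbatch m q Hq).
        assert (Hqarr : forall t, s m <= t -> INR (fifo_pos u q) * L <= L * INR (arrived_count a u (u q) t)).
        { intros t Ht. rewrite Rmult_comm. apply Rmult_le_compat_l; [lra|]. apply le_INR. apply F1; auto. lra. }
        assert (Hxarr : forall t, s m <= t -> INR (fifo_pos u x) * L <= L * INR (C' (u x) t)).
        { intros t Ht. rewrite HCt by auto. rewrite Rmult_comm. apply Rmult_le_compat_l; [lra|]. apply le_INR. apply F1; auto. }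
        assert (Hqarr' : INR (fifo_pos u q) * L <= L * INR (C' (u q) (s m))).
        { rewrite HCt by lra. apply Hqarr; lra. }
        destruct (dep_exists K N r L phi C' (Wh m) HN Hr HL Hphi HG (u q) (fifo_pos u q) (Hu q) (fifo_pos_ge1 u q)
                   (eventually K N r L phi C' (Wh m) (s m) HN Hr HL Hphi HG HCc (u q) _ (Hu q) Hqarr')) as [tq Htq].
        destruct (dep_exists K N r L phi C' (Wh m) HN Hr HL Hphi HG (u x) (fifo_pos u x) (Hu x) (fifo_pos_ge1 u x)
                   (eventually K N r L phi C' (Wh m) (s m) HN Hr HL Hphi HG HCc (u x) _ (Hu x) (Hxarr (s m) (Rle_refl _)))) as [tx Htx].
        assert (Hle : tq <= tx) by (apply (Hsel m q x Hq) with (tp := tq) (tq := tx); auto).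
        assert (HC : forall k0 t, (k0 < K)%nat -> t <= s m -> C' k0 t = arrived_count a u k0 t).
        { intros k0 t _ Ht. unfold C'. rewrite Rmin_left by auto. auto. }
        pose proof (gps_unique K N r L phi (arrived_count a u) C' W (Wh m) (s m) HN Hr HL Hphi HW HG HC
                     (loc_const a u Hmono Hunb)) as HWG.
        apply (order_contra K N r L phi (arrived_count a u) C' W (Wh m) (s m) HN Hr HL Hphi HW HG HWG
                 (u q) (u x) (fifo_pos u q) (fifo_pos u x) d tq tx (Hu q) (Hu x) Hqarr Hxarr).
        * unfold done in Hnq. lra.
        * apply HdoneS; auto.
        * apply Htq.
        * apply Htx.
        * apply Htx.
        * auto.
      +
        exists (s j), 0. split; [|split; [ring|split; [lra|apply Rmult_le_pos; [apply pos_INR|lra]]]].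
        intros x Hx. pose proof (HunS x Hx) as Hux. rewrite Hjm in Hux |- *.
        destruct (min_exists (fun y => ~ served_before B (S m) y) x Hux) as [n0 [Hn0 Hmin]].
        assert (Hw : s (S m) = Rmax (s m + bt m) (a n0)).
        { apply Hwc; auto. intros m' Hm'. apply NNPP. apply Hmin; auto. }
        assert (Hsn0 : s (S m) = a n0).
        { rewrite Hw in *. unfold Rmax in *. destruct (Rle_dec (s m + bt m) (a n0)); auto. contradiction. }
        rewrite Hsn0. apply Hmono. destruct (Nat.le_gt_cases n0 x); auto. exfalso; apply (Hmin x); auto. }
  destruct Key as [T [c [HT [Hc Hc0]]]].
  assert (HWT : forall x, In x Sx -> W (u x) T <= (INR (fifo_pos u x) - 1) * L).
  { intros x Hx. apply W_before. auto. }
  assert (HTd : T <= d).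
  { destruct (Rle_lt_dec T d) as [H|H]; auto. exfalso.
    assert (Hn' : In n Sx) by (unfold Sx; apply in_or_app; simpl; auto).
    pose proof (HWT n Hn'). pose proof (HdoneS n Hn'). unfold done in *.
    pose proof (W_mono K N r L phi _ W HN Hr HL Hphi HW (u n) d T (Hu n) ltac:(lra)). lra. }
  pose proof (count_bound K N r L phi _ W u HN Hr HL Hphi HW Sx T d HTd HndS (fun x _ => Hu x) HdoneS HWT) as Hcb.
  rewrite HlenS in Hcb.
  set (Sg := sumR (seq j k) (fun i => INR (length (B i)))) in *.
  assert (Hcb' : (Sg + 1) * tu <= d - T).
  { unfold tu. apply (Rmult_le_reg_r NR); auto. unfold Rdiv. rewrite Rmult_assoc, (Rmult_assoc L), Rinv_l by lra. lra. }
  pose proof (bt_le h). fold tu in H.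
  assert ((2 * INR M - 1) * L / NR = (2 * INR M - 1) * tu) by (unfold tu, Rdiv; ring).
  rewrite H0. rewrite Hsh, Hc, Hsum. lra.
Qed.

End Main.


Theorem theorem1 (K N M : nat) (r L : R) (phi : nat -> R)
  (a : nat -> R) (u : nat -> nat)
  (W : nat -> R -> R) (s : nat -> R) (B : nat -> list nat)
  (Wh : nat -> nat -> R -> R) :
  (0 < K)%nat -> (0 < N)%nat -> (1 <= M)%nat -> 0 < r -> 0 < L ->
  (forall k, (k < K)%nat -> 0 < phi k) ->
  (forall n, (u n < K)%nat) ->
  (forall n, 0 <= a n) ->
  (forall n m, (n <= m)%nat -> a n <= a m) ->
  (forall T, exists n, T < a n) ->
  is_GPS K N r phi L (arrived_count a u) W ->
  is_MPGPS K N M r phi L a u s B Wh ->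
  forall h n, In n (B h) ->
  forall d, gps_dep L u W n d ->
  mpgps_dep N r L s B h - d <= (2 * INR M - 1) * L / (INR N * r).
Proof.
  intros HK HN HM1 Hr HL Hphi Hu Ha0 Hmono Hunb HW HMP h n Hn d Hd.
  unfold mpgps_dep.
  exact (main_bound K N M r L phi a u W s B Wh HK HN HM1 Hr HL Hphi Hu Ha0 Hmono Hunb HW HMP h n d Hn Hd).
Qed.
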